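(* Let $p$ be a prime and $a,b,c\ge0$ integers with $a,b<p$ and $c\le a+b$. (1) If $c\ge b$, then $f(a,b,c)=t^{c-b}f(b,a,a+b-c)$. (2) If $a+b-(p-1)\le c\le p-1\le a+b$, then $$f(a,b,c)=(-1)^{a+c}(t-1)^{a+b-(p-1)}\,f\big(c-(a+b)+(p-1),\ (p-1)-c,\ (p-1)-b\big).$$
   Context: For non-negative integers $a,b,c$, $f(a,b,c)\in\overline{\mathbb{F}}_p[t]$ is $f(a,b,c)=\sum_{i_2+i_3=c}\binom{a}{i_2}\binom{b}{i_3}t^{i_2}$ (binomial coefficients reduced mod $p$, $\binom{n}{i}=0$ for $i<0$ or $i>n$). *)

(* Defs.v *)
From HB Require Import structures.
From mathcomp Require Import all_boot all_order all_algebra.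
Set Implicit Arguments. Unset Strict Implicit. Unset Printing Implicit Defensive.
Import GRing.Theory.
Local Open Scope ring_scope.

(* f(a,b,c) = sum_{i2+i3=c} C(a,i2) C(b,i3) t^{i2}, as a polynomial over a
   field F (of characteristic p in the statement); the nat binomial is cast
   into F, i.e. reduced mod p.  'C(n,k) = 0 for k > n. *)
Definition fpoly (F : fieldType) (a b c : nat) : {poly F} :=
  \sum_(i < c.+1) ('C(a, i) * 'C(b, c - i))%:R *: 'X^i.

(* Main.v *)
From HB Require Import structures.
From mathcomp Require Import all_boot all_order all_algebra.
From mathcomp Require Import ring lra zify.
Require Import Defs.
Import GRing.Theory.
Local Open Scope ring_scope.

Lemma binbin (a i k : nat) : (k <= i)%N ->
  ('C(a,i) * 'C(i,k) = 'C(a,k) * 'C(a-k,i-k))%N.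
Proof.
move=> hki.
case: (leqP i a) => hia; last first.
  rewrite (bin_small hia) mul0n.
  case: (leqP k a) => hka; last by rewrite (bin_small hka).
  rewrite (@bin_small (a-k) (i-k)) ?muln0 //; lia.
have hka : (k <= a)%N by lia.
apply/eqP; rewrite -(eqn_pmul2r (_ : 0 < k`! * (i-k)`! * (a-i)`!)%N); last by rewrite !muln_gt0 !fact_gt0.
have h1 := bin_fact hki. have h2 := bin_fact hia. have h3 := bin_fact hka.
have h4 : ('C(a-k,i-k) * ((i-k)`! * (a-i)`!) = (a-k)`!)%N.
  have := @bin_fact (a-k) (i-k) ltac:(lia). by have -> : (a - k - (i - k) = a - i)%N by lia.
apply/eqP.
transitivity (a`!).
  rewrite -h2 -h1. ring.
rewrite -h3 -h4. ring.
Qed.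

Lemma sumL (a b c k : nat) : (k <= c)%N ->
  (\sum_(i < c.+1) 'C(a,i) * 'C(b,c-i) * 'C(i,k) = 'C(a,k) * 'C(a+b-k,c-k))%N.
Proof.
move=> hkc.
rewrite -(big_mkord xpredT (fun i => 'C(a,i) * 'C(b,c-i) * 'C(i,k))%N).
rewrite (@big_cat_nat _ _ _ k) /=; last (by lia); last by [].
rewrite big1_seq ?add0n; last first.
  move=> i /andP[_]; rewrite mem_index_iota => /andP[_ hi]; by rewrite (bin_small hi) muln0.
rewrite -{1}(add0n k) big_addn.
have -> : (c.+1 - k = (c-k).+1)%N by lia.
case: (leqP k a) => hka; last first.
  rewrite (bin_small hka) mul0n big1_seq // => i _; rewrite (@bin_small a (i+k)) //; lia.
transitivity (\sum_(0 <= i < (c - k).+1) 'C(a,k) * ('C(a-k,i) * 'C(b,(c-k)-i)))%N.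
  apply: eq_big_nat => i /andP[_ hi].
  rewrite mulnAC binbin ?leq_addl //. have -> : (i + k - k = i)%N by lia.
  have -> : (c - (i+k) = c - k - i)%N by lia. ring.
rewrite -big_distrr /= big_mkord binomial.Vandermonde.
by have -> : (a - k + b = a + b - k)%N by lia.
Qed.
Definition Gs (F : fieldType) (a b c : nat) : {poly F} :=
  \poly_(k < c.+1) ('C(a,k) * 'C(a+b-k, c-k))%:R.

Lemma compXn (F : fieldType) (i : nat) (q : {poly F}) : 'X^i \Po q = q ^+ i.
Proof. by rewrite /comp_poly map_polyXn hornerXn. Qed.

Lemma coefX1n (F : fieldType) (i k : nat) : ((('X + 1) ^+ i : {poly F})`_k = ('C(i,k))%:R).
Proof.
rewrite exprD1n coef_sum.
under eq_bigr => j _ do rewrite coefMn coefXn.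
case: (ltnP k i.+1) => hk.
  rewrite (bigD1 (Ordinal hk)) //= eqxx big1 ?addr0 // => j hj.
  have : k != (j : nat). by apply: contra hj => /eqP h; apply/eqP/val_inj.
  by move/negbTE => ->; rewrite mul0rn.
rewrite bin_small // big1 // => j _.
have : k != (j : nat) by apply/eqP => h; move: (ltn_ord j); rewrite -h; lia.
by move/negbTE => ->; rewrite mul0rn.
Qed.

Lemma comp_fpoly (F : fieldType) a b c :
  fpoly F a b c \Po ('X + 1) = Gs F a b c.
Proof.
apply/polyP => k; rewrite coef_poly /fpoly.
rewrite (big_morph (fun p => p \Po ('X + 1)) (fun p q => comp_polyD p q _) (comp_poly0 _)).
rewrite coef_sum.
under eq_bigr => i _ do rewrite comp_polyZ compXn coefZ coefX1n -natrM.
rewrite -natr_sum.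
case: ifP => hk.
  by rewrite sumL.
rewrite big1 // => i _; rewrite (@bin_small i k) ?muln0 //.
move: (ltn_ord i) hk; lia.
Qed.

Section Modp.
Variables (F : fieldType) (p : nat).
Hypothesis hchar : p \in [pchar F].

Lemma fact_nz (i : nat) : (i < p)%N -> (i`!)%:R != 0 :> F.
Proof.
have hp := pcharf_prime hchar.
rewrite -(dvdn_pcharf hchar).
elim: i => [|i IH] hi; first by rewrite fact0 dvdn1; case: (p) hp => [|[|]].
rewrite factS Euclid_dvdM // negb_or IH ?andbT; last by lia.
by rewrite gtnNdvd.
Qed.

Lemma ffactK1 (j i : nat) : (j + i < p)%N ->
  (((p.-1 - j) ^_ i)%:R : F) = (-1) ^+ i * ((j + i) ^_ i)%:R.
Proof.
elim: i => [|i IH] hi; first by rewrite !ffactn0 expr0 mul1r.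
rewrite ffactnSr natrM IH; last by lia.
have -> : (j + i.+1 = (j + i).+1)%N by lia.
rewrite ffactSS natrM.
have -> : ((p.-1 - j - i)%:R = - ((j+i).+1)%:R :> F).
  apply/eqP; rewrite -subr_eq0 opprK -natrD.
  have -> : (p.-1 - j - i + (j + i).+1 = p)%N by lia.
  by rewrite (pcharf0 hchar).
rewrite exprS; ring.
Qed.

Lemma K1 (j i : nat) : (j + i < p)%N ->
  (('C(p.-1 - j, i))%:R : F) = (-1) ^+ i * ('C(j + i, i))%:R.
Proof.
move=> h.
have hf : (i`!)%:R != 0 :> F by apply: fact_nz; lia.
apply: (mulIf hf).
by rewrite -natrM bin_ffact ffactK1 // -mulrA -natrM bin_ffact.
Qed.

Lemma K2 (r i : nat) : (r < i)%N -> (i < p)%N -> (('C(p + r, i))%:R : F) = 0.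
Proof.
move=> hri hip; apply/eqP; rewrite -(dvdn_pcharf hchar).
have hp := pcharf_prime hchar.
rewrite -binomial.Vandermonde; apply: dvdn_sum => j _.
case: (posnP j) => hj.
  by rewrite hj subn0 (bin_small hri) muln0 dvdn0.
apply: dvdn_mulr; apply: prime_dvd_bin => //.
by rewrite hj /=; move: (ltn_ord j); lia.
Qed.

End Modp.

Lemma fpolyE (F : fieldType) a b c :
  fpoly F a b c = \poly_(i < c.+1) ('C(a,i) * 'C(b,c-i))%:R.
Proof. by rewrite poly_def. Qed.

Lemma fpoly_comp (F : fieldType) a b c :
  fpoly F a b c = Gs F a b c \Po ('X - 1).
Proof.
rewrite -comp_fpoly; have := comp_polyXaddC_K (fpoly F a b c) 1.
by rewrite polyC1.
Qed.

Lemma sign_poly (F : fieldType) n : ((-1) ^+ n : {poly F}) = ((-1) ^+ n)%:P.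
Proof. by rewrite polyC_exp polyCN polyC1. Qed.

Theorem lemmaA4 (F : fieldType) (p : nat) (hp : prime p) (hchar : p \in [pchar F])
  (a b c : nat) (ha : (a < p)%N) (hb : (b < p)%N) (hc : (c <= a + b)%N) :
  ((b <= c)%N ->
     fpoly F a b c = 'X^(c - b) * fpoly F b a (a + b - c))
  /\
  ((a + b - p.-1 <= c)%N -> (c <= p.-1)%N -> (p.-1 <= a + b)%N ->
     fpoly F a b c =
       (-1) ^+ (a + c) * ('X - 1) ^+ (a + b - p.-1)
       * fpoly F (c + p.-1 - (a + b)) (p.-1 - c) (p.-1 - b)).
Proof.
have hp1 : (1 < p)%N by apply: prime_gt1.
split.
  move=> hbc; apply/polyP => i.
  rewrite coefXnM !fpolyE !coef_poly.
  case: (ltnP i (c - b)) => h1.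
    rewrite ifT; last by lia.
    by rewrite (@bin_small b (c - i)) ?muln0 //; lia.
  case: (leqP i c) => h2; last first.
    rewrite ifF; last by lia.
    case: ifP => // _.
    by rewrite (@bin_small b (i - (c - b))) ?mul0n //; lia.
  rewrite ifT; last by lia.
  case: (leqP i a) => h3; last first.
    rewrite (bin_small h3) mul0n ifF //; lia.
  rewrite ifT; last by lia.
  have -> : (a + b - c - (i - (c - b)) = a - i)%N by lia.
  rewrite bin_sub //.
  have -> : (c - i = b - (i - (c - b)))%N by lia.
  rewrite bin_sub; last by lia.
  by rewrite mulnC.
move=> h1 h2 h3.
rewrite !fpoly_comp.
have -> : (-1) ^+ (a + c) * ('X - 1) ^+ (a + b - p.-1) * (Gs F (c + p.-1 - (a + b)) (p.-1 - c) (p.-1 - b) \Po ('X - 1)) =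
          ((-1) ^+ (a + c) * 'X ^+ (a + b - p.-1) * Gs F (c + p.-1 - (a + b)) (p.-1 - c) (p.-1 - b)) \Po ('X - 1).
  by rewrite !comp_polyM sign_poly comp_polyC compXn.
congr (_ \Po _).
apply/polyP => k.
rewrite sign_poly -mulrA coefCM coefXnM !coef_poly.
case: (ltnP k (a + b - p.-1)) => hke.
  rewrite mulr0 ifT; last by lia.
  rewrite natrM.
  have -> : (a + b - k = p + (a + b - k - p))%N by lia.
  rewrite (@K2 F p hchar) ?mulr0 //; lia.
case: (leqP k a) => hka; last first.
  rewrite [in RHS]ifF; last by lia.
  rewrite mulr0; case: ifP => // _.
  by rewrite bin_small ?mul0n.
case: (leqP k c) => hkc; last first.
  rewrite [in LHS]ifF; last by lia.
  case: ifP => _; last by rewrite mulr0.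
  by rewrite (@bin_small (c + p.-1 - (a + b)) (k - (a + b - p.-1))) ?mul0n ?mulr0 //; lia.
rewrite ifT; last by lia.
rewrite ifT; last by lia.
have -> : ((c + p.-1 - (a + b)) + (p.-1 - c) - (k - (a + b - p.-1)) = p.-1 - k)%N by lia.
have -> : ((p.-1 - b) - (k - (a + b - p.-1)) = a - k)%N by lia.
rewrite -(@bin_sub (c + p.-1 - (a + b)) (k - (a + b - p.-1))); last by lia.
have -> : ((c + p.-1 - (a + b)) - (k - (a + b - p.-1)) = c - k)%N by lia.
have -> : (c + p.-1 - (a + b) = p.-1 - (a + b - c))%N by lia.
rewrite !natrM (@K1 F p hchar); last by lia.
rewrite (@K1 F p hchar); last by lia.
have -> : (a + b - c + (c - k) = a + b - k)%N by lia.
have -> : (k + (a - k) = a)%N by lia.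
rewrite bin_sub //.
have hs : (-1) ^+ (a + c) * (-1) ^+ (c - k) * (-1) ^+ (a - k) = 1 :> F.
  rewrite -!exprD.
  have -> : (a + c + (c - k) + (a - k) = 2 * (a + c - k))%N by lia.
  by rewrite exprM sqrrN !expr1n.
transitivity ((-1) ^+ (a + c) * (-1) ^+ (c - k) * (-1) ^+ (a - k) *
   (('C(a, k))%:R * ('C(a + b - k, c - k))%:R) : F).
  by rewrite hs mul1r.
ring.
Qed.
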